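(* Given a field $F$ and a positive integer $n$, there is a finite group $H$ such that the group ring $F[H]$ has a subring isomorphic to the matrix algebra $M_n(F)$. *)

(* Defs.v *)
From mathcomp Require Import all_boot all_algebra all_fingroup.
Set Implicit Arguments. Unset Strict Implicit. Unset Printing Implicit Defensive.
Import GRing.Theory.
Local Open Scope ring_scope.

(* The group ring F[G] of a finite group G over a ring F: its elements are
   the formal sums sum_g a_g g, represented as finite functions G -> F
   (g |-> a_g). *)
Definition group_ring (F : nzRingType) (gT : finGroupType) := {ffun gT -> F}.

Definition gr_mul (F : nzRingType) (gT : finGroupType)
  (a b : {ffun gT -> F}) : {ffun gT -> F} :=
  [ffun x => \sum_(y : gT) a y * b ((y^-1 * x)%g)].

(* Main.v *)
Require Import Defs.
From HB Require Import structures.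
From mathcomp Require Import all_boot all_algebra all_fingroup.
Set Implicit Arguments. Unset Strict Implicit. Unset Printing Implicit Defensive.
Import GRing.Theory.
Local Open Scope ring_scope.

Section GR.
Variables (F : fieldType) (gT : finGroupType).
Definition GR := {ffun gT -> F}.
HB.instance Definition _ := GRing.Zmodule.on GR.
Definition gdelta (g : gT) : GR := [ffun x => (x == g)%:R].

Lemma gr_mulA : associative (@gr_mul F gT).
Proof.
move=> a b c; apply/ffunP=> x; rewrite !ffunE.
under [RHS]eq_bigr => z _ do rewrite ffunE big_distrl /=.
rewrite [RHS]exchange_big /=; apply: eq_bigr => y _.
rewrite ffunE big_distrr /= [RHS](reindex_inj (mulgI y)) /=; apply: eq_bigr => z _.
by rewrite mulrA mulKg invMg mulgA.
Qed.
Lemma gr_mul1l : left_id (gdelta 1) (@gr_mul F gT).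
Proof.
move=> a; apply/ffunP=> x; rewrite ffunE (bigD1 1%g) //= big1 ?addr0.
  by rewrite ffunE eqxx mul1r invg1 mul1g.
by move=> y /negbTE ny; rewrite ffunE ny mul0r.
Qed.
Lemma gr_mul1r : right_id (gdelta 1) (@gr_mul F gT).
Proof.
move=> a; apply/ffunP=> x; rewrite ffunE (bigD1 x) //= big1 ?addr0.
  by rewrite ffunE mulVg eqxx mulr1.
move=> y ny; rewrite ffunE.
have -> : (y^-1 * x == 1)%g = false.
  by apply/negbTE; apply: contra ny => /eqP h; rewrite -(mulKVg y x) h mulg1.
by rewrite mulr0.
Qed.
Lemma gr_mulDl : left_distributive (@gr_mul F gT) +%R.
Proof.
move=> a b c; apply/ffunP=> x; rewrite !ffunE -big_split /=.
by apply: eq_bigr => y _; rewrite ffunE mulrDl.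
Qed.
Lemma gr_mulDr : right_distributive (@gr_mul F gT) +%R.
Proof.
move=> a b c; apply/ffunP=> x; rewrite !ffunE -big_split /=.
by apply: eq_bigr => y _; rewrite ffunE mulrDr.
Qed.
Lemma gdelta1_neq0 : gdelta 1 != 0.
Proof. by apply/eqP => /ffunP /(_ 1%g); rewrite !ffunE eqxx; apply/eqP; rewrite oner_eq0. Qed.

HB.instance Definition _ := GRing.Zmodule_isNzRing.Build GR
  gr_mulA gr_mul1l gr_mul1r gr_mulDl gr_mulDr gdelta1_neq0.

Lemma GRmulE (a b : GR) : a * b = gr_mul a b. Proof. by []. Qed.
Definition gscale (a : F) (x : GR) : GR := [ffun g => a * x g].
Lemma gscaleA a b v : gscale a (gscale b v) = gscale (a * b) v.
Proof. by apply/ffunP=> g; rewrite !ffunE mulrA. Qed.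
Lemma gscale1 : left_id 1 gscale.
Proof. by move=> v; apply/ffunP=> g; rewrite !ffunE mul1r. Qed.
Lemma gscaleDr : right_distributive gscale +%R.
Proof. by move=> a u v; apply/ffunP=> g; rewrite !ffunE mulrDr. Qed.
Lemma gscaleDl v : {morph gscale^~ v: a b / a + b}.
Proof. by move=> a b; apply/ffunP=> g; rewrite !ffunE mulrDl. Qed.
HB.instance Definition _ := GRing.Zmodule_isLmodule.Build F GR
  gscaleA gscale1 gscaleDr gscaleDl.
Lemma GRscaleE a (x : GR) g : (a *: x) g = a * x g.
Proof. by rewrite /= ffunE. Qed.

Lemma GR_scalerAl (a : F) (x y : GR) : a *: (x * y) = (a *: x) * y.
Proof.
apply/ffunP=> z; rewrite GRscaleE /= !ffunE big_distrr /=.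
by apply: eq_bigr => w _; rewrite GRscaleE mulrA.
Qed.
Lemma GR_scalerAr (a : F) (x y : GR) : a *: (x * y) = x * (a *: y).
Proof.
apply/ffunP=> z; rewrite GRscaleE /= !ffunE big_distrr /=.
by apply: eq_bigr => w _; rewrite GRscaleE mulrCA.
Qed.

Lemma mul_deltal g (a : GR) z : (gdelta g * a) z = a (g^-1 * z)%g.
Proof.
rewrite /= ffunE (bigD1 g) //= big1 ?addr0; first by rewrite ffunE eqxx mul1r.
by move=> y /negbTE ny; rewrite ffunE ny mul0r.
Qed.
Lemma mul_deltar g (a : GR) z : (a * gdelta g) z = a (z * g^-1)%g.
Proof.
rewrite /= ffunE (bigD1 (z * g^-1)%g) //= big1 ?addr0.
  by rewrite ffunE invMg invgK mulgKV eqxx mulr1.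
move=> y ny; rewrite ffunE.
have -> : (y^-1 * z == g)%g = false.
  apply/negbTE; apply: contra ny => /eqP <-.
  by rewrite invMg invgK mulKVg.
by rewrite mulr0.
Qed.
Lemma deltaM g h : gdelta g * gdelta h = gdelta (g * h).
Proof.
apply/ffunP=> z; rewrite mul_deltal !ffunE; congr (_%:R).
by rewrite -(inj_eq (mulgI g)) mulKVg.
Qed.

Definition avg (X : {set gT}) : GR :=
  [ffun x => if x \in X then (#|X|%:R)^-1 else 0].

Lemma avgM (X Y : {group gT}) :
  (#|X|%:R : F) != 0 -> (#|Y|%:R : F) != 0 -> avg X * avg Y = avg (X * Y)%g.
Proof.
move=> nX nY; apply/ffunP=> z; rewrite /= !ffunE.
case: (boolP (z \in X * Y)%g) => hz; last first.
  rewrite big1 // => y _; rewrite !ffunE.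
  case: ifP => yX; last by rewrite mul0r.
  case: ifP => yY; last by rewrite mulr0.
  by case/negP: hz; rewrite -(mulKVg y z) mem_mulg.
case/mulsgP: hz => x y0 xX y0Y ->.
rewrite (reindex_inj (mulgI x)) /=.
rewrite (eq_bigr (fun w => if w \in X :&: Y then (#|X|%:R)^-1 * (#|Y|%:R)^-1 else 0)); last first.
  move=> w _; rewrite !ffunE groupMl // invMg -mulgA mulKg inE.
  rewrite groupMr // groupV.
  by case: (w \in X); case: (w \in Y); rewrite ?mulr0 ?mul0r.
rewrite -big_mkcond /= sumr_const.
have hc := mul_cardG X Y.
have e : (#|X|%:R * #|Y|%:R : F) = #|(X * Y)%g|%:R * #|X :&: Y|%:R by rewrite -!natrM hc.
have nI : (#|X :&: Y|%:R : F) != 0.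
  by apply: contraNneq (mulf_neq0 nX nY) => h; rewrite e h mulr0.
rewrite -[_ *+ #|X :&: Y|]mulr_natr -invfM e invfM -mulrA mulVf // mulr1.
done.
Qed.

Lemma avgJ (X : {set gT}) g : gdelta g^-1 * avg X * gdelta g = avg (X :^ g)%g.
Proof.
apply/ffunP=> z; rewrite mul_deltar mul_deltal !ffunE cardJg mem_conjg.
by rewrite /conjg invgK !mulgA.
Qed.
End GR.

Section Constr.
Variables (F : fieldType) (n' m : nat).
Hypothesis hm : (1 < m)%N.
Hypothesis hmF : (m%:R : F) != 0.
Local Notation n := n'.+1.
Local Notation Z := 'Z_m.
Local Notation T := ('I_n * Z)%type.
Local Notation V := {ffun 'I_n -> Z}.

Definition sigf (v : V) (x : T) : T := (x.1, x.2 + v x.1).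
Lemma sigf_inj v : injective (sigf v).
Proof.
move=> [a b] [c d] h; have /= ac := congr1 fst h; have /= bd := congr1 snd h.
by move: bd; rewrite ac => /addIr ->.
Qed.
Definition sig (v : V) : {perm T} := perm (@sigf_inj v).
Lemma sigE v x : sig v x = (x.1, x.2 + v x.1).
Proof. by rewrite permE. Qed.
Lemma sigM v w : (sig v * sig w)%g = sig (v + w).
Proof. by apply/permP=> x; rewrite permM !sigE /= ffunE addrA. Qed.
Lemma sig0 : sig 0 = 1%g.
Proof. by apply/permP=> x; rewrite sigE perm1 ffunE addr0; case: x. Qed.
Lemma sig_inj : injective sig.
Proof.
move=> v w h; apply/ffunP=> a.
have := congr1 (fun s : {perm T} => s (a, 0)) h; rewrite /= !sigE /= !add0r.
by case.
Qed.

Definition Qf (q : {perm 'I_n}) (x : T) : T := (q x.1, x.2).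
Lemma Qf_inj q : injective (Qf q).
Proof. by move=> [a b] [c d] [/perm_inj -> ->]. Qed.
Definition Q q : {perm T} := perm (@Qf_inj q).
Lemma QE q x : Q q x = (q x.1, x.2).
Proof. by rewrite permE. Qed.
Lemma QM q r : Q (q * r)%g = (Q q * Q r)%g.
Proof. by apply/permP=> x; rewrite permM !QE permM. Qed.
Lemma Q1 : Q 1%g = 1%g.
Proof. by apply/permP=> x; rewrite QE !perm1; case: x. Qed.
Lemma QV q : Q q^-1%g = (Q q)^-1%g.
Proof.
apply/eqP; rewrite eq_sym eq_invg_mul -QM mulgV Q1 //.
Qed.
Lemma sigJ v q : (sig v ^ Q q)%g = sig [ffun a => v (q^-1%g a)].
Proof.
apply/permP=> x; rewrite /conjg !permM -QV !sigE !QE /= ffunE.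
by rewrite permKV; case: x.
Qed.

Definition G0 : {set {perm T}} := [set sig v | v : V].
Definition P : {set {perm T}} := [set sig v | v in [set v : V | v ord0 == 0]].
Lemma G0_gset : group_set G0.
Proof.
apply/group_setP; split; first by apply/imsetP; exists 0 => //; rewrite sig0.
move=> x y /imsetP [v _ ->] /imsetP [w _ ->]; rewrite sigM.
by apply/imsetP; exists (v + w).
Qed.
Canonical G0_group := Group G0_gset.
Lemma P_gset : group_set P.
Proof.
apply/group_setP; split.
  by apply/imsetP; exists 0; rewrite ?sig0 // inE ffunE.
move=> x y /imsetP [v hv ->] /imsetP [w hw ->]; rewrite sigM.
apply/imsetP; exists (v + w) => //.
by move: hv hw; rewrite !inE ffunE => /eqP -> /eqP ->; rewrite addr0.
Qed.
Canonical P_group := Group P_gset.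

Lemma PG0 : P \subset G0.
Proof. by apply/subsetP=> x /imsetP [v _ ->]; apply/imsetP; exists v. Qed.

Lemma card_G0 : #|G0| = (m ^ n)%N.
Proof. by rewrite card_imset ?card_ffun ?card_ord //; [rewrite Zp_cast | exact: sig_inj]. Qed.

Lemma G0J q : (G0 :^ Q q)%g = G0.
Proof.
apply/eqP; rewrite eq_sym eqEcard cardJg leqnn andbT.
apply/subsetP=> x; rewrite mem_conjg => /imsetP [v _ hv].
by rewrite hv -QV sigJ; apply/imsetP; eexists.
Qed.

Lemma PJP (q : {perm 'I_n}) : q ord0 != ord0 -> ((P :^ Q q) * P)%g = G0.
Proof.
move=> hq; apply/eqP; rewrite eqEsubset; apply/andP; split.
  have h : (P :^ Q q)%g \subset (G0 :^ Q q)%g by rewrite conjSg PG0.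
  rewrite G0J in h; apply: (@mul_subG _ G0_group); [exact: h | exact: PG0].
apply/subsetP=> x /imsetP [u _ ->].
pose k := q ord0.
pose w1 : V := [ffun a => if a == k then 0 else u a].
have -> : u = w1 + (u - w1) by rewrite addrC subrK.
rewrite -sigM; apply: mem_mulg.
  have -> : sig w1 = (sig [ffun a => w1 (q a)] ^ Q q)%g.
    by rewrite sigJ; congr sig; apply/ffunP=> a; rewrite !ffunE permKV.
  rewrite memJ_conjg; apply/imsetP; eexists; last by reflexivity.
  by rewrite inE !ffunE eqxx.
apply/imsetP; eexists; last by reflexivity.
rewrite inE !ffunE /k; case: (ord0 =P q ord0) => [h|_]; [by rewrite -h eqxx in hq | by rewrite subrr].
Qed.

Lemma P_neq : exists2 x, x \in G0 & x \notin P.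
Proof.
exists (sig [ffun a => if a == ord0 then 1 else 0]); first by apply/imsetP; eexists.
apply/negP=> /imsetP [v]; rewrite inE => /eqP hv /sig_inj /ffunP /(_ ord0).
by rewrite !ffunE eqxx hv; apply/eqP; rewrite oner_eq0.
Qed.
Local Notation R := (GR F {perm T}).
Local Notation dl := (@gdelta F {perm T}).
Local Notation av := (@avg F {perm T}).
Definition e : R := av P - av G0.

Lemma cardF (H : {group {perm T}}) : H \subset G0 -> (#|H|%:R : F) != 0.
Proof.
move=> /cardSg /dvdnP [k hk].
have : (#|G0|%:R : F) != 0 by rewrite card_G0 natrX expf_neq0.
by rewrite hk natrM; apply: contraNneq => ->; rewrite mulr0.
Qed.

Lemma delta1 : dl 1%g = 1 :> R. Proof. by []. Qed.

Lemma eJ h : (G0 :^ h)%g = G0 ->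
  dl h^-1 * e * dl h = av (P :^ h)%g - av G0.
Proof. by move=> hG; rewrite mulrBr mulrBl !avgJ hG. Qed.

Lemma core h : (G0 :^ h)%g = G0 ->
  e * dl h * e = dl h * (av ((P :^ h) * P)%g - av G0).
Proof.
move=> hG.
have sPh : (P :^ h)%g \subset G0.
  have hh : (P :^ h)%g \subset (G0 :^ h)%g by rewrite conjSg PG0.
  by rewrite hG in hh.
have -> : e * dl h * e = dl h * (dl h^-1 * e * dl h) * e.
  by rewrite !mulrA deltaM mulgV delta1 mul1r.
rewrite eJ // -mulrA; congr (_ * _).
rewrite /e mulrBr !mulrBl.
rewrite (@avgM _ _ (P :^ h)%G P_group) ?cardF ?PG0 //.
rewrite (@avgM _ _ (P :^ h)%G G0_group) ?cardF ?PG0 //.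
rewrite (@avgM _ _ G0_group P_group) ?cardF ?PG0 //.
rewrite (@avgM _ _ G0_group G0_group) ?cardF ?PG0 //.
rewrite /= (mulSGid sPh) (mulGSid PG0) mulGid.
by rewrite subrr subr0.
Qed.

Lemma ee : e * e = e.
Proof.
have := core (conjsg1 G0); rewrite delta1 mulr1 mul1r conjsg1 mulGid.
by [].
Qed.

Definition gg (i : 'I_n) := Q (tperm ord0 i).
Definition E (i j : 'I_n) : R := dl (gg i) * e * dl (gg j)^-1.

Lemma key (j k : 'I_n) : e * dl ((gg j)^-1 * gg k) * e = if j == k then e else 0.
Proof.
case: eqP => [<- | njk]; first by rewrite mulVg delta1 mulr1 ee.
have -> : ((gg j)^-1 * gg k)%g = Q ((tperm ord0 j)^-1 * tperm ord0 k)%g.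
  by rewrite QM QV.
rewrite core ?G0J // PJP ?subrr ?mulr0 //.
rewrite permM tpermV tpermL; apply/eqP => h.
by apply: njk; apply: (@perm_inj _ (tperm ord0 k)); rewrite h tpermR.
Qed.

Lemma Emul i j k l : E i j * E k l = if j == k then E i l else 0.
Proof.
have -> : E i j * E k l = dl (gg i) * (e * dl ((gg j)^-1 * gg k) * e) * dl (gg l)^-1.
  by rewrite /E -deltaM !mulrA.
by rewrite key; case: eqP => _; rewrite ?mulr0 ?mul0r // mulrA.
Qed.

Definition phi (A : 'M[F]_n) : R := \sum_i \sum_j A i j *: E i j.

Lemma phiD A B : phi (A + B) = phi A + phi B.
Proof.
rewrite /phi -big_split; apply: eq_bigr => i _ /=.
rewrite -big_split; apply: eq_bigr => j _ /=.
by rewrite mxE scalerDl.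
Qed.

Lemma phiM A B : phi (A *m B) = phi A * phi B.
Proof.
rewrite /phi mulr_suml; apply: eq_bigr => i _.
rewrite mulr_suml.
transitivity (\sum_j \sum_l (A i j * B j l) *: E i l).
  rewrite exchange_big /=; apply: eq_bigr => l _.
  by rewrite mxE scaler_suml.
apply: eq_bigr => j _.
rewrite mulr_sumr [RHS](bigD1 j) //= [X in _ = _ + X]big1 ?addr0; last first.
  move=> k /negbTE njk; rewrite mulr_sumr big1 // => l _.
  by rewrite -GR_scalerAl -GR_scalerAr Emul eq_sym njk !scaler0.
rewrite mulr_sumr; apply: eq_bigr => l _.
by rewrite -GR_scalerAl -GR_scalerAr Emul eqxx scalerA.
Qed.

Lemma e_neq0 : e != 0.
Proof.
case: P_neq => x xG xP; apply/eqP => /ffunP /(_ x).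
rewrite /e /= !ffunE (negbTE xP) xG sub0r => /eqP.
by rewrite oppr_eq0 invr_eq0 (negbTE (cardF (subxx _))).
Qed.

Lemma Esand i j k l :
  e * dl (gg i)^-1 * E k l * dl (gg j) * e = if (i == k) && (l == j) then e else 0.
Proof.
have -> : e * dl (gg i)^-1 * E k l * dl (gg j) * e =
    (e * dl ((gg i)^-1 * gg k) * e) * dl ((gg l)^-1 * gg j) * e.
  by rewrite /E -!deltaM !mulrA.
rewrite key; case: (i =P k) => _ /=; last by rewrite !mul0r.
by rewrite key.
Qed.

Lemma Ssum (f : 'I_n -> R) (L M N : R) :
  L * (\sum_k f k) * M * N = \sum_k L * f k * M * N.
Proof. by rewrite mulr_sumr !mulr_suml. Qed.
Lemma Sscale a (x L M N : R) : L * (a *: x) * M * N = a *: (L * x * M * N).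
Proof. by rewrite -GR_scalerAr -!GR_scalerAl. Qed.

Lemma sand i j A : e * dl (gg i)^-1 * phi A * dl (gg j) * e = A i j *: e.
Proof.
rewrite /phi Ssum (bigD1 i) //= [X in _ + X]big1 ?addr0; last first.
  move=> k /negbTE nik; rewrite Ssum big1 // => l _.
  by rewrite Sscale Esand eq_sym nik scaler0.
rewrite Ssum (bigD1 j) //= [X in _ + X]big1 ?addr0; last first.
  move=> l /negbTE nlj.
  by rewrite Sscale Esand nlj andbF scaler0.
by rewrite Sscale Esand !eqxx.
Qed.

Lemma phi_inj : injective phi.
Proof.
move=> A B h; apply/matrixP=> i j; apply/eqP; rewrite -subr_eq0.
have := congr1 (fun x => e * dl (gg i)^-1 * x * dl (gg j) * e) h.
rewrite /= !sand => /eqP; rewrite -subr_eq0 -scalerBl scaler_eq0 (negbTE e_neq0).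
by rewrite orbF.
Qed.
End Constr.

Unset Implicit Arguments.
Set Strict Implicit.
Theorem lemma3p1 (F : fieldType) (n : nat) (hn : (0 < n)%N) :
  exists (gT : finGroupType) (phi : 'M[F]_n -> {ffun gT -> F}),
    [/\ injective phi,
        forall A B : 'M[F]_n, phi (A + B) = phi A + phi B &
        forall A B : 'M[F]_n, phi (A *m B) = gr_mul (phi A) (phi B)].
Proof.
case: n hn => // n' _.
pose m := if (2%:R : F) == 0 then 3%N else 2%N.
have hm : (1 < m)%N by rewrite /m; case: ifP.
have hmF : (m%:R : F) != 0.
  rewrite /m; case: ifP => [/eqP h2|/negbT //].
  by rewrite -addn1 natrD h2 add0r oner_eq0.
exists ({perm ('I_n'.+1 * 'Z_m)} : finGroupType), (@phi F n' m); split.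
- exact: phi_inj.
- exact: phiD.
- exact: phiM.
Qed.
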